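(* Let $U$ be a connected graph containing exactly one cycle, where the cycle has an even number of vertices, exactly one vertex of the cycle has degree $3$ in $U$, and all other vertices of the cycle have degree $2$ in $U$. Let $\Delta$ be the distance squared matrix of $U$. If $U$ has at least one vertex of degree $2$ that is not on the cycle, then $i_0(\Delta)\ge 1$.
   Context: For a connected graph with vertices $1,\dots,n$, the distance squared matrix is the matrix with $(i,j)$ entry $d_{ij}^2$, where $d_{ij}$ is the graph distance between $i$ and $j$. For a real symmetric matrix $M$, $i_0(M)$ denotes the multiplicity of $0$ as an eigenvalue of $M$. *)

(* Defs.v *)
From HB Require Import structures.
From mathcomp Require Import all_boot all_order all_algebra.
Set Implicit Arguments. Unset Strict Implicit. Unset Printing Implicit Defensive.
Import Order.TTheory GRing.Theory Num.Theory.

Definition simple_graph (T : finType) (e : rel T) : Prop :=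
  symmetric e /\ irreflexive e.

Definition connected_graph (T : finType) (e : rel T) : Prop :=
  forall x y : T, connect e x y.

Definition deg (T : finType) (e : rel T) (x : T) : nat := #|[set y | e x y]|.

(* graph distance: the least k such that there is a walk of length k from x
   to y (searched among 0 .. #|T|-1, enough for a connected graph) *)
Definition walk_of_len (T : finType) (e : rel T) (x y : T) (k : nat) : bool :=
  [exists p : k.-tuple T, path e x p && (last x p == y)].

Definition gdist (T : finType) (e : rel T) (x y : T) : nat :=
  find (walk_of_len e x y) (iota 0 #|T|).

Definition is_cycle (T : finType) (e : rel T) (c : seq T) : bool :=
  [&& cycle e c, uniq c & (2 < size c)].

Definition cycle_edge (T : finType) (c : seq T) (x y : T) : bool :=
  (x \in c) && ((next c x == y) || (prev c x == y)).

(* U contains exactly one cycle, namely the one given by c: every cycle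
   of U is the same subgraph (same edge set) as c *)
Definition unique_cycle (T : finType) (e : rel T) (c : seq T) : Prop :=
  is_cycle e c /\
  forall c' : seq T, is_cycle e c' ->
    forall x y, cycle_edge c' x y = cycle_edge c x y.

Definition dist_sq_mx (R : nzRingType) (n : nat) (e : rel 'I_n) : 'M[R]_n :=
  \matrix_(i, j) (((gdist e i j) ^ 2)%N%:R)%R.

Definition i0 (R : fieldType) (n : nat) (M : 'M[R]_n) : nat :=
  mup 0%R (char_poly M).

(* Main.v *)
Require Import Defs.
From HB Require Import structures.
From mathcomp Require Import all_boot all_order all_algebra.
From mathcomp Require Import zify ring lra.
Import Order.TTheory GRing.Theory Num.Theory.

Module Aux.
Set Implicit Arguments. Unset Strict Implicit. Unset Printing Implicit Defensive.
Section Dist.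
Variables (T : finType) (e : rel T).
Hypothesis esymm : symmetric e.
Hypothesis conn : forall x y : T, connect e x y.

Definition W x y m := exists p : seq T, [/\ size p = m, path e x p & last x p = y].

Lemma walk_of_lenP x y m : reflect (W x y m) (walk_of_len e x y m).
Proof.
apply: (iffP existsP) => [[p /andP[pp /eqP lp]] | [p [sp pp lp]]].
  by exists (val p); rewrite size_tuple.
have sp' : size p == m by apply/eqP.
by exists (Tuple sp'); rewrite /= pp lp eqxx.
Qed.

Lemma W_short x y : exists2 m, m < #|T| & W x y m.
Proof.
have /connectP [p pp ->] := conn x y.
case: (shortenP pp) => p' pp' up' _.
exists (size p'); last by exists p'.
have := card_uniqP up' => /= <-; exact: max_card.
Qed.

Notation d := (gdist e).

Lemma dist_lt x y : d x y < #|T|.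
Proof.
have [m mlt wm] := W_short x y.
have hh : has (walk_of_len e x y) (iota 0 #|T|).
  by apply/hasP; exists m; [rewrite mem_iota | apply/walk_of_lenP].
by rewrite /gdist -[X in _ < X](size_iota 0) -has_find.
Qed.

Lemma dist_walk x y : W x y (d x y).
Proof.
have [m mlt wm] := W_short x y.
have hh : has (walk_of_len e x y) (iota 0 #|T|).
  by apply/hasP; exists m; [rewrite mem_iota | apply/walk_of_lenP].
have := nth_find 0 hh; rewrite nth_iota; last exact: dist_lt.
by rewrite add0n => /walk_of_lenP.
Qed.

Lemma dist_min x y m : W x y m -> d x y <= m.
Proof.
move=> wm; case: (ltnP m #|T|) => hm; last by apply: ltnW; apply: leq_trans (dist_lt x y) hm.
rewrite leqNgt; apply/negP => hlt.
have := before_find 0 hlt; rewrite nth_iota ?add0n //.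
by move/walk_of_lenP: wm => ->.
Qed.

Lemma W_rcons x y z m : W x y m -> e y z -> W x z m.+1.
Proof.
by case=> p [sp pp lp] eyz; exists (rcons p z); rewrite size_rcons rcons_path last_rcons lp sp pp eyz.
Qed.

Lemma W_cons x y z m : e x y -> W y z m -> W x z m.+1.
Proof. by move=> exy [p [sp pp lp]]; exists (y :: p); rewrite /= exy sp pp lp. Qed.

Lemma W_sym x y m : W x y m -> W y x m.
Proof.
case=> p [<- pp <-]; elim: p x pp => [|z p IH] x /=.
  by move=> _; exists [::].
case/andP=> exz pz; apply: W_rcons (IH _ pz) _; by rewrite esymm.
Qed.

Lemma W_cat x y z m k : W x y m -> W y z k -> W x z (m + k).
Proof.
case=> p [<- pp <-] [q [<- pq <-]]; exists (p ++ q).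
by rewrite size_cat cat_path last_cat pp pq.
Qed.

Lemma dist_sym x y : d x y = d y x.
Proof.
by apply/eqP; rewrite eqn_leq !dist_min //; apply: W_sym; apply: dist_walk.
Qed.

Lemma dist_tri x y z : d x z <= d x y + d y z.
Proof. by apply: dist_min; apply: W_cat; apply: dist_walk. Qed.

Lemma dist_xx x : d x x = 0.
Proof. by apply/eqP; rewrite -leqn0; apply: dist_min; exists [::]. Qed.

Lemma dist_edge x y : e x y -> d x y <= 1.
Proof. by move=> exy; apply: dist_min; exists [:: y]; rewrite /= exy. Qed.

Lemma dist0 x y : d x y = 0 -> x = y.
Proof. by move=> h; have := dist_walk x y; rewrite h => -[[|? ?]] [] //= _ _ ->. Qed.

Lemma dist_pred x y : x != y -> exists z, e x z /\ (d z y).+1 = d x y.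
Proof.
move=> nxy; have := dist_walk x y; case=> [[|z p]] [sp pp lp].
  by move: lp nxy => /= ->; rewrite eqxx.
move: pp => /= /andP[exz pz]; exists z; split => //.
apply/eqP; rewrite eqn_leq; apply/andP; split.
  by rewrite -sp /=; apply: dist_min; exists p.
apply: leq_trans (dist_tri x z y) _; rewrite -add1n leq_add2r; exact: dist_edge.
Qed.

Lemma dist_lip (phi : T -> nat) : (forall x y, e x y -> phi y <= phi x + 1) ->
  forall x y, phi y <= phi x + d x y.
Proof.
move=> hl x y; have := dist_walk x y; case=> p [<- pp <-] {y}.
elim: p x pp => [|z p IH] x /=; first by rewrite addn0.
case/andP=> exz pz; apply: leq_trans (IH _ pz) _.
apply: leq_trans (leq_add (hl _ _ exz) (leqnn _)) _; lia.
Qed.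

Lemma dist_mem_walk x s y : path e x s -> y \in s -> d y (last x s) < size s.
Proof.
elim: s x => [|z s IH] x //= /andP[exz pz]; rewrite inE => /orP[/eqP->|ys].
  by rewrite ltnS; apply: dist_min; exists s.
by apply: leq_trans (IH _ pz ys) _.
Qed.

Lemma last_rev_belast (q u : T) Q : last q Q = u -> last u (rev (belast q Q)) = q.
Proof.
elim: Q q => [|z Q IH] q /=; first by move=> ->.
by move=> /IH h; rewrite rev_cons last_rcons.
Qed.

Hypothesis eirr : irreflexive e.

Lemma cut_vertex (c : seq T) w p q u : unique_cycle e c ->
  w \notin c -> e w p -> e w q -> p != q -> (d p u).+1 = d w u -> d q u <= d w u -> False.
Proof.
move=> [_ uc] wc ewp ewq npq hp hq.
have [P [sP pP lP]] := dist_walk p u.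
have [Q [sQ pQ lQ]] := dist_walk q u.
have wP : w \notin P.
  apply/negP => /(dist_mem_walk pP); rewrite lP sP -hp; lia.
have wQ : w \notin Q.
  apply/negP => /(dist_mem_walk pQ); rewrite lQ sQ; lia.
have wq : w != q by apply/eqP => h; move: ewq; rewrite h eirr.
have wp : w != p by apply/eqP => h; move: ewp; rewrite h eirr.
set s := P ++ rev (belast q Q).
have ps : path e p s.
  rewrite cat_path pP lP /= -{1}lQ rev_path.
  by rewrite (@eq_path _ _ e) // => x y /=; rewrite esymm.
have ls : last p s = q by rewrite /s last_cat lP last_rev_belast.
have ws : w \notin s.
  rewrite mem_cat mem_rev negb_or wP /=; apply/negP => /mem_belast.
  by rewrite inE (negbTE wq) (negbTE wQ).
case: (shortenP ps) ls => s' ps' us' ss' ls'.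
have ws' : w \notin p :: s'.
  rewrite inE negb_or wp /=; apply/negP => /ss'; exact/negP.
have cyc : is_cycle e [:: w, p & s'].
  rewrite /is_cycle /= ewp rcons_path ps' ls' esymm ewq /=; move: ws' us'; rewrite /= => -> -> /=.
  by case: s' {ps' ss'} ls' => //= ?; move/eqP: npq.
have := uc _ cyc w p; rewrite /cycle_edge mem_head next_nth mem_head /= eqxx /= eqxx /=.
by move/esym/andP=> [wc' _]; move/negP: wc.
Qed.

Lemma dist1 x y : e x y -> d x y = 1.
Proof.
move=> exy; have := dist_edge exy; case: (d x y) (@dist0 x y) => [|[|]] //.
by move=> /(_ erefl) h; move: exy; rewrite h eirr.
Qed.

Lemma deg2_nbrs w : deg e w = 2 -> exists p q, [/\ p != q, e w p, e w q &
  forall z, e w z -> z = p \/ z = q].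
Proof.
rewrite /deg => /eqP/cards2P [p [q [npq hs]]]; exists p, q; split => //.
- have : p \in [set y | e w y] by rewrite hs !inE eqxx.
  by rewrite inE.
- have : q \in [set y | e w y] by rewrite hs !inE eqxx orbT.
  by rewrite inE.
move=> z ewz; have : z \in [set y | e w y] by rewrite inE.
by rewrite hs !inE => /orP[/eqP|/eqP]; [left|right].
Qed.

Lemma xw_ident (c : seq T) w p q u : unique_cycle e c -> w \notin c ->
  p != q -> e w p -> e w q -> (forall z, e w z -> z = p \/ z = q) ->
  (d u p)^2 + (d u q)^2 = 2 * (d u w)^2 + 2.
Proof.
move=> uc wc npq ewp ewq hz.
have key : forall p q, p != q -> e w p -> e w q -> (d p u).+1 = d w u -> d q u = (d w u).+1.
  move=> p' q' npq' ewp' ewq' hp; apply/eqP; rewrite eqn_leq; apply/andP; split.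
    by apply: leq_trans (dist_tri q' w u) _; rewrite -add1n leq_add2r dist_sym dist_edge.
  by rewrite ltnNge; apply/negP => /(cut_vertex uc wc ewp' ewq' npq' hp).
case: (eqVneq u w) => [->|nuw].
  by rewrite dist_xx !dist1.
have nwu : w != u by rewrite eq_sym.
have [z [ewz hzd]] := dist_pred nwu.
rewrite !(dist_sym u).
case: (hz _ ewz) => hzz; subst z.
  by have := key _ _ npq ewp ewq hzd; move: hzd => <- ->; lia.
have nqp : q != p by rewrite eq_sym.
have := key _ _ nqp ewq ewp hzd.
by move: hzd => <- ->; lia.
Qed.
End Dist.

Section Arith.
Variable k : nat.
Hypothesis k2 : 2 <= k.
Definition NN := k + k.
Definition fwd i j := if i <= j then j - i else j + NN - i.
Definition cd i j := minn (fwd i j) (fwd j i).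
Definition succ j := if j.+1 < NN then j.+1 else 0.
Definition pr j := if 0 < j then j.-1 else NN.-1.
Definition anti j := if j + k < NN then j + k else j - k.

Ltac arith := intros; unfold cd, fwd, succ, pr, anti, NN in *;
  repeat match goal with
  | |- context [if ?b then _ else _] => destruct b eqn:?
  | H : context [if ?b then _ else _] |- _ => destruct b eqn:?
  end; try apply/eqP; lia.

Lemma cd_ii i : cd i i = 0. Proof. arith. Qed.
Lemma cd_sym i j : cd i j = cd j i. Proof. arith. Qed.
Lemma succ_lt j : j < NN -> succ j < NN. Proof. arith. Qed.
Lemma pr_lt j : j < NN -> pr j < NN. Proof. arith. Qed.
Lemma anti_lt j : j < NN -> anti j < NN. Proof. arith. Qed.
Lemma pr_succ j : j < NN -> pr (succ j) = j. Proof. arith. Qed.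
Lemma succ_pr j : j < NN -> succ (pr j) = j. Proof. arith. Qed.
Lemma succ_neq_pr j : j < NN -> succ j != pr j. Proof. arith. Qed.
Lemma succ_neq j : j < NN -> succ j != j. Proof. arith. Qed.
Lemma pr_neq j : j < NN -> pr j != j. Proof. arith. Qed.
Lemma cd_succ1 i j : i < NN -> j < NN -> cd i (succ j) <= cd i j + 1. Proof. arith. Qed.
Lemma cd_succ2 i j : i < NN -> j < NN -> cd i j <= cd i (succ j) + 1. Proof. arith. Qed.
Lemma cd_anti i j : i < NN -> j < NN -> cd i j + cd i (anti j) = k. Proof. arith. Qed.
Lemma cd_succ_self j : j < NN -> cd (succ j) j = 1. Proof. arith. Qed.
Lemma cd_pr_self j : j < NN -> cd (pr j) j = 1. Proof. arith. Qed.
Lemma anti_neq j : j < NN -> anti j != j. Proof. arith. Qed.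
End Arith.

Section Cyc.
Variables (T : finType) (e : rel T).
Hypothesis esymm : symmetric e.
Hypothesis conn : forall x y : T, connect e x y.
Hypothesis eirr : irreflexive e.
Variables (c : seq T) (v : T) (k : nat).
Hypothesis cyc : cycle e c.
Hypothesis cu : uniq c.
Hypothesis k2 : 2 <= k.
Hypothesis sc : size c = NN k.
Hypothesis vc : v \in c.
Hypothesis degv : deg e v = 3.
Hypothesis deg2 : forall x, x \in c -> x != v -> deg e x = 2.

Notation d := (gdist e).
Notation N := (NN k).
Let cc i := nth v c i.
Let iv := index v c.

Lemma ivN : iv < N. Proof. by rewrite -sc index_mem. Qed.
Lemma cc_index x : x \in c -> cc (index x c) = x. Proof. exact: nth_index. Qed.
Lemma index_cc i : i < N -> index (cc i) c = i.
Proof. by move=> h; rewrite /cc index_uniq // sc. Qed.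
Lemma cc_in i : i < N -> cc i \in c. Proof. by move=> h; rewrite /cc mem_nth // sc. Qed.
Lemma index_lt x : x \in c -> index x c < N. Proof. by rewrite -sc index_mem. Qed.
Lemma cc_inj i j : i < N -> j < N -> cc i = cc j -> i = j.
Proof. by move=> hi hj h; rewrite -(index_cc hi) -(index_cc hj) h. Qed.
Lemma cc_iv : cc iv = v. Proof. exact: cc_index. Qed.

Lemma edge_succ j : j < N -> e (cc j) (cc (succ k j)).
Proof.
move=> hj; move: cyc; rewrite (cycle_path v) => /(pathP v) hp.
rewrite /succ; case: ifP => hs.
  by have := hp j.+1; rewrite sc hs /=; apply.
have -> : j = (size c).-1 by rewrite sc; lia.
rewrite /cc nth_last; have := hp 0; rewrite sc /=; apply; lia.
Qed.

Lemma edge_pr j : j < N -> e (cc j) (cc (pr k j)).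
Proof.
move=> hj; have := edge_succ (pr_lt k2 hj); rewrite succ_pr // esymm //.
Qed.

Lemma nbr2 j z : j < N -> cc j != v -> e (cc j) z -> z = cc (succ k j) \/ z = cc (pr k j).
Proof.
move=> hj hv hz.
have [p [q [npq _ _ hpq]]] := deg2_nbrs (deg2 (cc_in hj) hv).
have hne : cc (succ k j) != cc (pr k j).
  apply/negP => /eqP /(cc_inj (succ_lt k2 hj) (pr_lt k2 hj)) /eqP.
  by rewrite (negbTE (succ_neq_pr k2 hj)).
move/eqP: hne => hne; move/eqP: npq => npq.
case: (hpq _ hz) => hz'; case: (hpq _ (edge_succ hj)) => hs; case: (hpq _ (edge_pr hj)) => hr;
  first [ by left; congruence | by right; congruence | exfalso; congruence ].
Qed.

Lemma offc_nbr x y : x \in c -> y \notin c -> e x y -> x = v.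
Proof.
move=> xc yc exy; apply/eqP; apply/negPn/negP => xv.
rewrite -(cc_index xc) in exy xv.
by case: (nbr2 (index_lt xc) xv exy) => h; move: yc; rewrite h cc_in //;
  [apply: succ_lt | apply: pr_lt]; rewrite ?index_lt.
Qed.

Lemma nbr_v_in_c y : y \in c -> e v y -> y = cc (succ k iv) \/ y = cc (pr k iv).
Proof.
move=> yc evy; set l := index y c.
have hl : l < N by apply: index_lt.
have hyv : cc l != v by rewrite /l cc_index //; apply/eqP => h; move: evy; rewrite h eirr.
rewrite esymm -(cc_index yc) -/l in evy.
case: (nbr2 hl hyv evy) => h.
  have : iv = succ k l by apply: cc_inj; rewrite ?succ_lt ?ivN // cc_iv.
  by move=> ->; rewrite pr_succ // /l cc_index //; right.
have : iv = pr k l by apply: cc_inj; rewrite ?pr_lt ?ivN // cc_iv.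
by move=> ->; rewrite succ_pr // /l cc_index //; left.
Qed.


Lemma walk_fwd m i : i + m < N -> W e (cc i) (cc (i + m)) m.
Proof.
elim: m => [|m IH] h; first by rewrite addn0; exists [::].
apply: W_rcons (IH _) _; first lia.
have hh : i + m < N by lia.
have := edge_succ hh; rewrite /succ.
have -> : (i + m).+1 < N = true by lia.
by rewrite addnS.
Qed.

Lemma dist_fwd i j : i < N -> j < N -> d (cc i) (cc j) <= fwd k i j.
Proof.
move=> hi hj; apply: (dist_min conn); rewrite /fwd; case: ifP => hij.
  have hh : i + (j - i) < N by lia.
  by have := walk_fwd hh; rewrite subnKC.
have hh1 : i + (N.-1 - i) < N by lia.
have hw1 := walk_fwd hh1.
have he : e (cc (i + (N.-1 - i))) (cc 0).
  have := edge_succ hh1; rewrite /succ.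
  by have -> : (i + (N.-1 - i)).+1 < N = false by lia.
have hh2 : 0 + j < N by lia.
have hw2 := walk_fwd hh2.
have := W_cat (W_rcons hw1 he) hw2.
by have -> : (N.-1 - i).+1 + j = j + N - i by lia.
Qed.

Lemma dist_cd i j : i < N -> j < N -> d (cc i) (cc j) <= cd k i j.
Proof.
move=> hi hj; rewrite /cd leq_min dist_fwd //=.
by rewrite dist_sym // dist_fwd.
Qed.

Definition phi i x := if x \in c then cd k i (index x c) else cd k i iv + d v x.

Lemma phi_lip i x y : i < N -> e x y -> phi i y <= phi i x + 1.
Proof.
move=> hi exy; rewrite /phi.
case xc: (x \in c); case yc: (y \in c).
- have hj := index_lt xc; have hl := index_lt yc.
  case: (eqVneq x v) => [xv|xv].
  + have yv : cc (index y c) != v.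
      by rewrite cc_index //; apply/eqP => h; move: exy; rewrite xv -h eirr.
    rewrite esymm -(cc_index yc) in exy.
    case: (nbr2 hl yv exy) => h.
      have -> : index x c = succ k (index y c).
        by apply: cc_inj; rewrite ?succ_lt // cc_index.
      exact: cd_succ2.
    have -> : index x c = pr k (index y c).
      by apply: cc_inj; rewrite ?pr_lt // cc_index.
    by have := cd_succ1 k2 hi (pr_lt k2 hl); rewrite succ_pr.
  + rewrite -(cc_index xc) in exy xv.
    case: (nbr2 hj xv exy) => h.
      have -> : index y c = succ k (index x c).
        by apply: cc_inj; rewrite ?succ_lt // -h cc_index.
      exact: cd_succ1.
    have -> : index y c = pr k (index x c).
      by apply: cc_inj; rewrite ?pr_lt // -h cc_index.
    by have := cd_succ2 k2 hi (pr_lt k2 hj); rewrite succ_pr.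
- have xv := offc_nbr xc (negbT yc) exy.
  by rewrite xv in exy *; rewrite dist1.
- have yv := offc_nbr yc (negbT xc) (etrans (esymm y x) exy).
  by rewrite yv -/iv -addnA leq_addr.
- rewrite -addnA leq_add2l; apply: leq_trans (dist_tri conn v x y) _.
  by rewrite leq_add2l dist_edge.
Qed.

Lemma dist_cc i x : i < N -> d (cc i) x = phi i x.
Proof.
move=> hi; apply/eqP; rewrite eqn_leq; apply/andP; split; last first.
  have := dist_lip conn (fun x y => @phi_lip i x y hi) (cc i) x.
  by rewrite /phi cc_in // index_cc // cd_ii.
rewrite /phi; case: ifP => xc.
  by rewrite -{1}(cc_index xc) dist_cd // index_lt.
apply: leq_trans (dist_tri conn (cc i) v x) _; apply: leq_add => //.
by rewrite -{1}cc_iv dist_cd // ivN.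
Qed.


Lemma t_exists : exists t, [/\ t \notin c, e v t & forall z, z \notin c -> e v z -> z = t].
Proof.
set a := cc (succ k iv); set b := cc (pr k iv).
have ac : a \in c by rewrite cc_in // succ_lt // ivN.
have bc : b \in c by rewrite cc_in // pr_lt // ivN.
have nab : a != b.
  apply/negP => /eqP /(cc_inj (succ_lt k2 ivN) (pr_lt k2 ivN)) /eqP.
  by rewrite (negbTE (succ_neq_pr k2 ivN)).
have eva : e v a by rewrite -{1}cc_iv edge_succ // ivN.
have evb : e v b by rewrite -{1}cc_iv edge_pr // ivN.
case: (pickP [pred y | e v y && (y \notin c)]) => [t /andP[evt tc] | none].
  exists t; split => // z zc evz; apply/eqP; apply/negPn/negP => nzt.
  have hsub : a |: (b |: (z |: [set t])) \subset [set y | e v y].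
    by apply/subsetP => y; rewrite !inE => /or4P[] /eqP ->.
  have := subset_leq_card hsub; rewrite -/(deg e v) degv.
  have naz : a != z by apply/eqP => h; move: zc; rewrite -h ac.
  have nat : a != t by apply/eqP => h; move: tc; rewrite -h ac.
  have nbz : b != z by apply/eqP => h; move: zc; rewrite -h bc.
  have nbt : b != t by apply/eqP => h; move: tc; rewrite -h bc.
  rewrite !cardsU1 cards1 !inE (negbTE nab) (negbTE naz) (negbTE nat) (negbTE nbz) (negbTE nbt) (negbTE nzt).
  by [].
have hsub : [set y | e v y] \subset [set a; b].
  apply/subsetP => y; rewrite !inE => evy.
  have yc : y \in c by have := none y; rewrite /= evy /= => /negbFE.
  by case: (nbr_v_in_c yc evy) => ->; rewrite eqxx ?orbT.
have := subset_leq_card hsub; rewrite cards2 -/(deg e v) degv.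
by case: (a != b).
Qed.


Lemma y_ident t u : t \notin c -> e v t -> (forall z, z \notin c -> e v z -> z = t) ->
  (k + 1) * (d u v) ^ 2 + (k * k + k) = (d u (cc (anti k iv))) ^ 2 + k * (d u t) ^ 2.
Proof.
move=> tc evt tu.
have hia := anti_lt k2 ivN.
have hac : cc (anti k iv) \in c by apply: cc_in.
case uc: (u \in c).
  have hi := index_lt uc; rewrite -(cc_index uc).
  rewrite !dist_cc // /phi vc hac (negbTE tc) index_cc // dist1 // -/iv.
  have := cd_anti k2 hi ivN; nia.
rewrite !(dist_sym esymm conn u).
have -> : d v u = d (cc iv) u by rewrite cc_iv.
rewrite !dist_cc ?ivN // /phi uc -/iv.
have hk : cd k (anti k iv) iv = k.
  have := cd_anti k2 hia ivN; have := @cd_ii k k2 (anti k iv); lia.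
rewrite hk (@cd_ii k k2) add0n.
have nvu : v != u by apply/eqP => h; move: uc; rewrite -h vc.
have [z [evz hz]] := dist_pred conn nvu.
case zc: (z \in c).
  exfalso; case: (nbr_v_in_c zc evz) => hzz; move: hz; rewrite hzz dist_cc ?succ_lt ?pr_lt ?ivN // /phi uc -/iv.
    rewrite cd_succ_self ?ivN //; lia.
  rewrite cd_pr_self ?ivN //; lia.
have := tu _ (negbT zc) evz => hzt; subst z.
move: hz; rewrite (dist_sym esymm conn t u) => <-; nia.
Qed.

End Cyc.

Lemma i0_of_kernel (R : fieldType) n (M : 'M[R]_n) (z : 'rV[R]_n) :
  (z != 0)%R -> (z *m M = 0)%R -> 1 <= i0 M.
Proof.
move=> nz hz; rewrite /i0 -XsubC_dvd ?monic_neq0 ?char_poly_monic //.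
rewrite dvdp_XsubCl -eigenvalue_root_char; apply/eigenvalueP; exists z => //.
by rewrite hz scale0r.
Qed.

End Aux.
Import Aux.

Theorem lemma6p4 (R : realFieldType) (n : nat) (e : rel 'I_n) :
  simple_graph e ->
  connected_graph e ->
  forall c : seq 'I_n,
    unique_cycle e c ->
    ~~ odd (size c) ->
    (exists v, v \in c /\ deg e v = 3 /\
       forall x, x \in c -> x != v -> deg e x = 2) ->
    (exists w, w \notin c /\ deg e w = 2) ->
    1 <= i0 (dist_sq_mx R e).
Proof.
move=> [esymm eirr] conn c uc hodd [v [vc [degv deg2]]] [w [wc degw]].
have [ic _] := uc; move: ic => /and3P [cyc cu sc2].
set k := (size c)./2.
have sc : size c = NN k.
  by rewrite /NN addnn /k; have := odd_double_half (size c); rewrite (negbTE hodd).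
have k2 : (1 < k)%N by move: sc2; rewrite sc /NN; lia.
have [p [q [npq ewp ewq hpq]]] := deg2_nbrs degw.
have [t [tc evt tu]] := t_exists esymm eirr cyc cu k2 sc vc degv deg2.
set iv := index v c.
have ivN : (iv < NN k)%N by rewrite -sc index_mem.
set a := nth v c (anti k iv).
have ac : a \in c by exact: (cc_in v sc (anti_lt k2 ivN)).
set d := gdist e.
have Hy u := y_ident esymm conn eirr cyc cu k2 sc vc degv deg2 u tc evt tu.
have Hw u := xw_ident esymm conn eirr u uc wc npq ewp ewq hpq.
pose dl (x : 'I_n) : 'rV[R]_n := delta_mx ord0 x.
pose K : R := ((k * k + k)%:R)%R.
pose z := ((2 * (k + 1))%:R *: dl v - 2%:R *: dl a - (2 * k)%:R *: dl t
   + K *: dl p + K *: dl q - (2%:R * K) *: dl w)%R.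
apply: (@i0_of_kernel _ _ _ z).
  have av : (a == v) = false.
    apply/negP => /eqP h; have := anti_neq k2 ivN; rewrite -/iv.
    have -> : anti k iv = iv; last by rewrite eqxx.
    apply: (cc_inj (v := v) cu sc (anti_lt k2 ivN) ivN).
    by rewrite /= -/a h nth_index.
  have at_ : (a == t) = false by apply/negP => /eqP h; move: tc; rewrite -h ac.
  have aw : (a == w) = false by apply/negP => /eqP h; move: wc; rewrite -h ac.
  have anb x : e w x -> (a == x) = false.
    move=> ewx; apply/negP => /eqP h; rewrite -h in ewx.
    have := offc_nbr esymm cyc cu k2 sc vc degv deg2 ac wc.
    by rewrite esymm => /(_ ewx) /eqP; rewrite av.
  apply/negP => /eqP hz0; have := congr1 (fun M : 'rV[R]_n => M ord0 a) hz0.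
  rewrite !mxE /= eqxx av at_ aw (anb _ ewp) (anb _ ewq) /=.
  lra.
apply/rowP => j.
rewrite /z !mulmxDl ?mulmxBl ?mulNmx -!scalemxAl /dl -!rowE !mxE.
have H1 := Hy j; have H2 := Hw j.
rewrite !(dist_sym esymm conn j) in H1 H2.
move/(congr1 (fun x => (x%:R : R)%R)): H1; rewrite !natrD !natrM ?natrX ?expr2 => H1.
move/(congr1 (fun x => (x%:R : R)%R)): H2; rewrite !natrD !natrM ?natrX ?expr2 => H2.
rewrite -/iv -/a in H1 *.
have e1 : (((gdist e a j)%:R * (gdist e a j)%:R : R) = (k + 1)%N%:R * ((gdist e v j)%:R * (gdist e v j)%:R) + K - k%:R * ((gdist e t j)%:R * (gdist e t j)%:R))%R.
  rewrite /K ?natrD ?natrM; rewrite ?natrD in H1; lra.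
have e2 : (((gdist e p j)%:R * (gdist e p j)%:R : R) = 2%:R * ((gdist e w j)%:R * (gdist e w j)%:R) + 2%:R - ((gdist e q j)%:R * (gdist e q j)%:R))%R.
  lra.
rewrite e1 e2 /K !natrD !natrM; ring.
Qed.
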